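(* Let $S=\{p_1,\dots,p_N\}\subset\mathbb{R}^n$, let $f:S\to\mathbb{R}^m$, and let $x\in\mathbb{R}^n\setminus S$. Suppose there exist $J\subset\{1,\dots,N\}$, a point $f_0$ in the convex hull of $\{f(p_j)\}_{j\in J}$, and $\lambda_0>0$ such that $\|f_0-f(p_j)\|=\lambda_0\|x-p_j\|$ for all $j\in J$ and $\|f_0-f(p_i)\|\le\lambda_0\|x-p_i\|$ for all $i\in\{1,\dots,N\}$. Then $\lambda_0=\lambda(f,S)(x)$ and $f_0=K(f,S)(x)$.
   Context: $\|\cdot\|$ is the Euclidean norm. $\lambda(f,S)(x):=\inf_{y\in\mathbb{R}^m}\sup_{i\in\{1,\dots,N\}}\|y-f(p_i)\|/\|x-p_i\|$. There is a unique $y\in\mathbb{R}^m$ attaining this infimum, and it is denoted $K(f,S)(x)$ (the Kirszbraun value of $f$ restricted to $S$ at $x$). *)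

(* Defs.v *)
From HB Require Import structures.
From mathcomp Require Import all_boot all_order all_algebra.
From mathcomp Require Import all_classical all_reals.
Set Implicit Arguments. Unset Strict Implicit. Unset Printing Implicit Defensive.
Import Order.TTheory GRing.Theory Num.Theory.
Local Open Scope ring_scope.
Local Open Scope classical_set_scope.

(* Euclidean norm on R^k (MathComp's default matrix norm is the sup norm). *)
Definition enorm (R : realType) (k : nat) (v : 'rV[R]_k) : R :=
  Num.sqrt (\sum_(i < k) v ord0 i ^+ 2).

(* S = {p_1,...,p_N} given by p : 'I_N -> R^n, f : R^n -> R^m (only its values on S matter). *)
(* sup_i ||y - f(p_i)|| / ||x - p_i||   (all terms are >= 0, so max with bottom 0 is the sup) *)
Definition lam_at (R : realType) (n m N : nat) (p : 'I_N -> 'rV[R]_n)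
  (f : 'rV[R]_n -> 'rV[R]_m) (x : 'rV[R]_n) (y : 'rV[R]_m) : R :=
  \big[Num.max/0]_(i < N) (enorm (y - f (p i)) / enorm (x - p i)).

Definition lambdaK (R : realType) (n m N : nat) (p : 'I_N -> 'rV[R]_n)
  (f : 'rV[R]_n -> 'rV[R]_m) (x : 'rV[R]_n) : R :=
  inf [set r | exists y : 'rV[R]_m, r = lam_at p f x y].

(* K(f,S)(x): the point y attaining the infimum (chosen; unique by the paper). *)
Definition KirszbraunK (R : realType) (n m N : nat) (p : 'I_N -> 'rV[R]_n)
  (f : 'rV[R]_n -> 'rV[R]_m) (x : 'rV[R]_n) : 'rV[R]_m :=
  xget 0 [set y : 'rV[R]_m | lam_at p f x y = lambdaK p f x].

(* Main.v *)
Require Import Defs.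
From HB Require Import structures.
From mathcomp Require Import all_boot all_order all_algebra.
From mathcomp Require Import all_classical all_reals.
From mathcomp Require Import ring lra.
Import Order.TTheory GRing.Theory Num.Theory.
Local Open Scope ring_scope.
Set Implicit Arguments. Unset Strict Implicit.

Section Helpers.
Variable R : realType.

Definition sq (k : nat) (v : 'rV[R]_k) : R := \sum_(i < k) v ord0 i ^+ 2.

Lemma sq_ge0 k (v : 'rV[R]_k) : 0 <= sq v.
Proof. by apply: sumr_ge0 => i _; apply: sqr_ge0. Qed.

Lemma enormE k (v : 'rV[R]_k) : enorm v = Num.sqrt (sq v).
Proof. by []. Qed.

Lemma sq_eq0 k (v : 'rV[R]_k) : sq v = 0 -> v = 0.
Proof.
move=> h; apply/rowP => i; rewrite mxE.
have : v ord0 i ^+ 2 = 0.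
  by apply: (psumr_eq0P _ h) => // j _; apply: sqr_ge0.
by move/eqP; rewrite sqrf_eq0 => /eqP.
Qed.

Lemma enorm_gt0 k (v : 'rV[R]_k) : v != 0 -> 0 < enorm v.
Proof.
move=> hv; rewrite enormE sqrtr_gt0 lt_neqAle sq_ge0 andbT.
by apply/eqP => h; move/eqP: hv; apply; apply: sq_eq0.
Qed.

Lemma sq_gt0 k (v : 'rV[R]_k) : v != 0 -> 0 < sq v.
Proof.
move=> hv; rewrite lt_neqAle sq_ge0 andbT.
by apply/eqP => h; move/eqP: hv; apply; apply: sq_eq0.
Qed.

Lemma key m N (w : 'I_N -> R) (F : 'I_N -> 'rV[R]_m) (f0 y : 'rV[R]_m) :
  \sum_(j < N) w j = 1 -> f0 = \sum_(j < N) w j *: F j ->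
  \sum_(j < N) w j * (sq (y - F j) - sq (f0 - F j)) = sq (y - f0).
Proof.
move=> hw hf0; rewrite /sq.
under eq_bigr => j _ do rewrite -sumrB mulr_sumr.
rewrite exchange_big /=; apply: eq_bigr => k _.
have hc : f0 ord0 k = \sum_(j < N) w j * F j ord0 k.
  by rewrite hf0 summxE; apply: eq_bigr => j _; rewrite mxE.
rewrite !mxE hc.
set c := \sum_(j < N) w j * F j ord0 k.
under eq_bigr => j _ do rewrite !mxE hc -/c.
transitivity (\sum_(j < N) (w j * (y ord0 k ^+ 2 - c ^+ 2)
   - (2 * (y ord0 k - c)) * (w j * F j ord0 k))).
  by apply: eq_bigr => j _; ring.
rewrite sumrB -mulr_suml -mulr_sumr hw -/c; ring.
Qed.

Lemma exists_big N (w D : 'I_N -> R) S :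
  (forall j, 0 <= w j) -> \sum_(j < N) w j = 1 ->
  \sum_(j < N) w j * D j = S ->
  exists j, 0 < w j /\ S <= D j.
Proof.
move=> w0 hw hD.
case: (boolP [exists j, (0 < w j) && (S <= D j)]).
  by move/existsP => [j /andP[a b]]; exists j.
rewrite negb_exists => /forallP hn.
have hle j : w j * (D j - S) <= 0.
  move: (hn j); rewrite negb_and -leNgt -ltNge.
  case/orP => h.
    have -> : w j = 0 by apply/eqP; rewrite eq_le h w0.
    by rewrite mul0r.
  by rewrite mulr_ge0_le0 // subr_le0 ltW.
have hsum : \sum_(j < N) w j * (D j - S) = 0.
  under eq_bigr => j _ do rewrite mulrBr.
  by rewrite sumrB hD -mulr_suml hw mul1r subrr.
have h0 : forall j, - (w j * (D j - S)) = 0.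
  have hs : \sum_(j < N) - (w j * (D j - S)) = 0 by rewrite sumrN hsum oppr0.
  move=> j; apply: (psumr_eq0P _ hs) => // i _; by rewrite oppr_ge0.
have : exists j, 0 < w j.
  case: (boolP [exists j, 0 < w j]); first by move/existsP.
  rewrite negb_exists => /forallP hn2.
  have : \sum_(j < N) w j = 0.
    apply: big1 => j _; apply/eqP; rewrite eq_le w0 andbT.
    by move: (hn2 j); rewrite -leNgt.
  by rewrite hw => /eqP; rewrite oner_eq0.
case=> j hj.
move: (hn j); rewrite hj /= -ltNge => hlt.
move/eqP: (h0 j); rewrite oppr_eq0 mulf_eq0 (gt_eqF hj) /= subr_eq0 => /eqP e.
by move: hlt; rewrite e ltxx.
Qed.

End Helpers.

Theorem mainTheorem6 (R : realType) (n m N : nat) (p : 'I_N -> 'rV[R]_n)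
  (f : 'rV[R]_n -> 'rV[R]_m) (x : 'rV[R]_n)
  (J : {set 'I_N}) (f0 : 'rV[R]_m) (lambda0 : R) :
  (forall i, x != p i) ->
  (exists w : 'I_N -> R,
      (forall j, 0 <= w j) /\ (forall j, j \notin J -> w j = 0) /\
      \sum_(j < N) w j = 1 /\ f0 = \sum_(j < N) w j *: f (p j)) ->
  0 < lambda0 ->
  (forall j, j \in J -> enorm (f0 - f (p j)) = lambda0 * enorm (x - p j)) ->
  (forall i, enorm (f0 - f (p i)) <= lambda0 * enorm (x - p i)) ->
  lambda0 = lambdaK p f x /\ f0 = KirszbraunK p f x.
Proof.
move=> hx [w [w0 [wJ [hw hf0]]]] hl hJ hle.
have hd i : 0 < enorm (x - p i) by apply: enorm_gt0; rewrite subr_eq0.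
have lower : forall y, exists j,
    lambda0 <= enorm (y - f (p j)) / enorm (x - p j) /\
    (y != f0 -> lambda0 < enorm (y - f (p j)) / enorm (x - p j)).
  move=> y.
  have [j [wj hj]] := exists_big w0 hw (@key R m N w (fun j => f (p j)) f0 y hw hf0).
  have jJ : j \in J.
    case: (boolP (j \in J)) => // /wJ e; by rewrite e ltxx in wj.
  have hs : sq (f0 - f (p j)) + sq (y - f0) <= sq (y - f (p j)) by rewrite -lerBrDl.
  exists j; split.
    rewrite ler_pdivlMr // -hJ // !enormE ler_sqrt ?sq_ge0 //.
    by apply: le_trans hs; rewrite lerDl sq_ge0.
  move=> hy; rewrite ltr_pdivlMr // -hJ // !enormE ltr_sqrt.
    by apply: lt_le_trans hs; rewrite ltrDl sq_gt0 // subr_eq0.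
  apply: lt_le_trans hs; apply: ltr_wpDl; [exact: sq_ge0 | apply: sq_gt0; by rewrite subr_eq0].
have lamge : forall y, lambda0 <= lam_at p f x y.
  move=> y; have [j [h _]] := lower y; apply: le_trans h _; exact: le_bigmax.
have lamf0 : lam_at p f x f0 = lambda0.
  apply/eqP; rewrite eq_le lamge andbT /lam_at.
  apply: bigmax_le; first exact: ltW.
  by move=> i _; rewrite ler_pdivrMr // mulrC.
have uniq : forall y, lam_at p f x y = lambda0 -> y = f0.
  move=> y hy; apply/eqP; apply/negPn/negP => hne.
  have [j [_ h]] := lower y; have := h hne.
  move=> hlt; have : lambda0 < lam_at p f x y.
    apply: lt_le_trans hlt _; exact: le_bigmax.
  by rewrite hy ltxx.
have hlam : lambdaK p f x = lambda0.
  rewrite /lambdaK; apply/eqP; rewrite eq_le; apply/andP; split.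
    have hlb : has_lbound [set r | exists y : 'rV[R]_m, r = lam_at p f x y].
      by exists lambda0 => z [y ->]; apply: lamge.
    by apply: (ge_inf hlb); exists f0; rewrite lamf0.
  apply: lb_le_inf; first by exists lambda0, f0; rewrite lamf0.
  by move=> z [y ->]; apply: lamge.
split; first by rewrite hlam.
rewrite /KirszbraunK hlam; symmetry; apply: xget_unique => //.
Qed.
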